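(* Let $f:\mathbb{R}^N\to\mathbb{R}_{++}\cup\{\infty\}$ be a standard interference function and let $f_\infty:\mathbb{R}^N\to\mathbb{R}\cup\{\infty\}$ be its asymptotic function. Then: (i) For every $\mathbf{x}\in\mathbb{R}_+^N$, $f_\infty(\mathbf{x})=\lim_{h\to\infty}f(h\mathbf{x})/h\in\mathbb{R}_+$. (ii) $f_\infty$ is lower semicontinuous and positively homogeneous. If, in addition, $f$ is continuous when restricted to $\mathbb{R}_+^N$, then $f_\infty$ is continuous when restricted to $\mathbb{R}_+^N$. (iii) For all $\mathbf{x}_1,\mathbf{x}_2\in\mathbb{R}_+^N$, $\mathbf{x}_1\ge\mathbf{x}_2$ implies $f_\infty(\mathbf{x}_2)\le f_\infty(\mathbf{x}_1)$. (iv) If $f$ is continuous when restricted to $\mathbb{R}_+^N$, then for every $\mathbf{x}\in\mathbb{R}_+^N$ and all sequences $(\mathbf{x}_n)_{n\in\mathbb{N}}\subset\mathbb{R}_+^N$ and $(h_n)_{n\in\mathbb{N}}\subset\mathbb{R}_{++}$ with $\mathbf{x}_n\to\mathbf{x}$ and $h_n\to\infty$, we have $f_\infty(\mathbf{x})=\lim_{n\to\infty}f(h_n\mathbf{x}_n)/h_n$. (v) If $f$ is concave when restricted to $\mathbb{R}_+^N$, then $f_\infty$ is concave when restricted to $\mathbb{R}_+^N$.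
   Context: Vector inequalities are coordinatewise; $\mathbb{R}_+$, $\mathbb{R}_{++}$ denote nonnegative and positive reals. A function $f:\mathbb{R}^N\to\mathbb{R}_{++}\cup\{\infty\}$ is a standard interference function if: (1) for all $\mathbf{x}\in\mathbb{R}_+^N$ and all $\alpha>1$, $\alpha f(\mathbf{x})>f(\alpha\mathbf{x})$; (2) for all $\mathbf{x}_1,\mathbf{x}_2\in\mathbb{R}_+^N$, $\mathbf{x}_1\ge\mathbf{x}_2$ implies $f(\mathbf{x}_1)\ge f(\mathbf{x}_2)$; (3) $f(\mathbf{x})=\infty$ iff $\mathbf{x}\notin\mathbb{R}_+^N$. For a proper function $f:\mathbb{R}^N\to\mathbb{R}\cup\{\infty\}$ (i.e., finite somewhere), its asymptotic function is $f_\infty(\mathbf{x})=\inf\{\liminf_{n\to\infty} f(h_n\mathbf{x}_n)/h_n : (h_n)\subset\mathbb{R},\ h_n\to\infty,\ (\mathbf{x}_n)\subset\mathbb{R}^N,\ \mathbf{x}_n\to\mathbf{x}\}$, equivalently $f_\infty(\mathbf{x})=\liminf_{h\to\infty,\mathbf{y}\to\mathbf{x}} f(h\mathbf{y})/h$. Continuity (resp. concavity) ''when restricted to $\mathbb{R}_+^N$'' refers to the restriction of the function to $\mathbb{R}_+^N$. *)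

(* Defs.v *)
From HB Require Import structures.
From mathcomp Require Import all_boot all_order all_algebra.
From mathcomp Require Import all_classical all_reals all_analysis.
Set Implicit Arguments. Unset Strict Implicit. Unset Printing Implicit Defensive.
Import Order.TTheory GRing.Theory Num.Theory.
Import numFieldNormedType.Exports.
Local Open Scope classical_set_scope.
Local Open Scope ring_scope.

Definition nonnegv {R : realType} {N : nat} (x : 'rV[R]_N) : Prop :=
  forall i : 'I_N, 0 <= x ord0 i.

Definition orthant (R : realType) (N : nat) : set 'rV[R]_N := [set x | nonnegv x].

Definition vle {R : realType} {N : nat} (x2 x1 : 'rV[R]_N) : Prop :=
  forall i : 'I_N, x2 ord0 i <= x1 ord0 i.

Local Open Scope ereal_scope.

Definition standard_interference {R : realType} {N : nat}
    (f : 'rV[R]_N -> \bar R) : Prop :=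
  (forall x, 0 < f x) /\
  (forall x, nonnegv x -> forall alpha : R, (1 < alpha)%R ->
       f (alpha *: x) < alpha%:E * f x) /\
  (forall x1 x2, nonnegv x1 -> nonnegv x2 -> vle x2 x1 -> f x2 <= f x1) /\
  (forall x, f x = +oo <-> ~ nonnegv x).

Definition asymptotic_fun {R : realType} {N : nat}
    (f : 'rV[R]_N -> \bar R) (x : 'rV[R]_N) : \bar R :=
  ereal_inf [set l | exists (h : nat -> R) (xs : nat -> 'rV[R]_N),
     [/\ h @ \oo --> +oo%R, xs @ \oo --> x &
         l = limn_einf (fun n => f (h n *: xs n) * ((h n)^-1)%:E)]].

Definition pos_homogeneous {R : realType} {N : nat}
    (g : 'rV[R]_N -> \bar R) : Prop :=
  forall x (lam : R), (0 < lam)%R -> g (lam *: x) = lam%:E * g x.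

Definition concave_on_orthant {R : realType} {N : nat}
    (g : 'rV[R]_N -> \bar R) : Prop :=
  forall x y, nonnegv x -> nonnegv y -> forall t : R, (0 <= t <= 1)%R ->
    t%:E * g x + (1 - t)%:E * g y <= g (t *: x + (1 - t) *: y)%R.

(* Main.v *)
Require Import Defs.
From HB Require Import structures.
From mathcomp Require Import all_boot all_order all_algebra.
From mathcomp Require Import all_classical all_reals all_analysis.
From mathcomp Require Import ring lra.
Import Order.TTheory GRing.Theory Num.Theory.
Import numFieldNormedType.Exports.
Local Open Scope classical_set_scope.
Local Open Scope ring_scope.

Definition Fr {R : realType} {N : nat} (f : 'rV[R]_N -> \bar R) x : R := fine (f x).
Definition lv {R : realType} {N : nat} (f : 'rV[R]_N -> \bar R) x : R :=
  inf [set Fr f (h *: x) / h | h in [set h : R | 0 < h]].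

Lemma nn_scale {R : realType} {N : nat} {x : 'rV[R]_N} {h : R} :
  nonnegv x -> 0 <= h -> nonnegv (h *: x).
Proof. by move=> hx h0 i; rewrite mxE mulr_ge0. Qed.

Lemma Ffin {R : realType} {N : nat} {f : 'rV[R]_N -> \bar R} x :
  standard_interference f -> nonnegv x -> f x = (Fr f x)%:E /\ 0 < Fr f x.
Proof.
move=> [pos [_ [_ inf]]] hx; rewrite /Fr.
have := pos x; have : f x <> +oo%E by move/inf.
by case: (f x) => [r| |] //= _; rewrite lte_fin.
Qed.

Lemma Fscal {R : realType} {N : nat} {f : 'rV[R]_N -> \bar R} x a :
  standard_interference f -> nonnegv x -> 1 < a -> Fr f (a *: x) < a * Fr f x.
Proof.
move=> Hf hx a1; have := Hf.2.1 x hx a a1.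
have a0 : 0 <= a by apply: le_trans (ltW a1).
rewrite (Ffin _ Hf hx).1 (Ffin _ Hf (nn_scale hx a0)).1.
by rewrite -EFinM lte_fin.
Qed.

Lemma Fmono {R : realType} {N : nat} {f : 'rV[R]_N -> \bar R} x1 x2 :
  standard_interference f -> nonnegv x1 -> nonnegv x2 -> vle x2 x1 ->
  Fr f x2 <= Fr f x1.
Proof.
move=> Hf h1 h2 le; have := Hf.2.2.1 x1 x2 h1 h2 le.
by rewrite (Ffin _ Hf h1).1 (Ffin _ Hf h2).1 lee_fin.
Qed.

Lemma Fdecr {R : realType} {N : nat} {f : 'rV[R]_N -> \bar R} x h h' :
  standard_interference f -> nonnegv x -> 0 < h -> h <= h' ->
  Fr f (h' *: x) / h' <= Fr f (h *: x) / h.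
Proof.
move=> Hf hx h0 hh'.
have h'0 : 0 < h' by apply: lt_le_trans hh'.
move: hh'; rewrite le_eqVlt => /predU1P[<-//|hh'].
have a1 : 1 < h' / h by rewrite ltr_pdivlMr // mul1r.
have := Fscal _ _ Hf (nn_scale hx (ltW h0)) a1.
rewrite scalerA mulrVK ?unitfE ?gt_eqF //.
move=> lt; rewrite ler_pdivrMr // mulrAC ler_pdivlMr //.
have e : h' / h * Fr f (h *: x) = Fr f (h *: x) * h' / h.
  by rewrite mulrC mulrA.
move: lt; rewrite e ltr_pdivlMr // => lt.
exact: ltW.
Qed.

Lemma Fpos {R : realType} {N : nat} {f : 'rV[R]_N -> \bar R} x :
  standard_interference f -> nonnegv x -> 0 < Fr f x.
Proof. by move=> Hf hx; have [] := Ffin _ Hf hx. Qed.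

Lemma lv_hasinf {R : realType} {N : nat} {f : 'rV[R]_N -> \bar R} x :
  standard_interference f -> nonnegv x ->
  has_inf [set Fr f (h *: x) / h | h in [set h : R | 0 < h]].
Proof.
move=> Hf hx; split.
  by exists (Fr f (1 *: x) / 1); exists 1 => //=; rewrite ltr01.
exists 0 => _ [h /= h0 <-].
by rewrite divr_ge0 // ?ltW // (Fpos _ Hf (nn_scale hx (ltW h0))).
Qed.

Lemma lv_lb {R : realType} {N : nat} {f : 'rV[R]_N -> \bar R} x h :
  standard_interference f -> nonnegv x -> 0 < h -> lv f x <= Fr f (h *: x) / h.
Proof.
move=> Hf hx h0; apply: ge_inf; first by case: (lv_hasinf _ Hf hx).
by exists h.
Qed.

Lemma lv_glb {R : realType} {N : nat} {f : 'rV[R]_N -> \bar R} x a :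
  standard_interference f -> nonnegv x ->
  (forall h, 0 < h -> a <= Fr f (h *: x) / h) -> a <= lv f x.
Proof.
move=> Hf hx H; apply: lb_le_inf; first by case: (lv_hasinf _ Hf hx).
by move=> _ [h /= h0 <-]; apply: H.
Qed.

Lemma lv_ge0 {R : realType} {N : nat} {f : 'rV[R]_N -> \bar R} x :
  standard_interference f -> nonnegv x -> 0 <= lv f x.
Proof.
move=> Hf hx; apply: lv_glb => // h h0.
by rewrite divr_ge0 // ?ltW // (Fpos _ Hf (nn_scale hx (ltW h0))).
Qed.

Lemma lv_approx {R : realType} {N : nat} {f : 'rV[R]_N -> \bar R} x e :
  standard_interference f -> nonnegv x -> 0 < e ->
  exists2 H, 0 < H & forall h, H <= h -> Fr f (h *: x) / h < lv f x + e.
Proof.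
move=> Hf hx e0; have [_ [H /= H0 <-] lt] := inf_adherent e0 (lv_hasinf _ Hf hx).
exists H => // h Hh; apply: le_lt_trans lt; exact: Fdecr.
Qed.

Lemma lv_mono {R : realType} {N : nat} {f : 'rV[R]_N -> \bar R} x1 x2 :
  standard_interference f -> nonnegv x1 -> nonnegv x2 -> vle x2 x1 ->
  lv f x2 <= lv f x1.
Proof.
move=> Hf h1 h2 le; apply: lv_glb => // h h0.
apply: (le_trans (lv_lb _ _ Hf h2 h0)); rewrite ler_pM2r ?invr_gt0 //.
apply: Fmono => //; try exact: nn_scale (ltW h0).
by move=> i; rewrite !mxE ler_pM2l.
Qed.

Lemma lv_hom_le {R : realType} {N : nat} {f : 'rV[R]_N -> \bar R} x c :
  standard_interference f -> nonnegv x -> 0 < c -> c * lv f x <= lv f (c *: x).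
Proof.
move=> Hf hx c0; apply: lv_glb => //; first exact: nn_scale (ltW c0).
move=> h h0; rewrite scalerA.
have := lv_lb _ _ Hf hx (mulr_gt0 h0 c0).
rewrite -(ler_pM2l c0) => /le_trans; apply.
rewrite le_eqVlt; apply/orP; left; apply/eqP; field.
by rewrite !gt_eqF.
Qed.

Lemma lv_hom {R : realType} {N : nat} {f : 'rV[R]_N -> \bar R} x c :
  standard_interference f -> nonnegv x -> 0 < c -> lv f (c *: x) = c * lv f x.
Proof.
move=> Hf hx c0; apply/eqP; rewrite eq_le (lv_hom_le _ _ Hf hx c0) andbT.
have ci : 0 < c^-1 by rewrite invr_gt0.
have := lv_hom_le _ _ Hf (nn_scale hx (ltW c0)) ci.
rewrite scalerA mulVf ?gt_eqF // scale1r -(ler_pM2l c0) mulrA mulfV ?gt_eqF//.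
by rewrite mul1r.
Qed.

Lemma near_ge {R : realType} {N : nat} (x : 'rV[R]_N) c : nonnegv x -> c < 1 ->
  \forall y \near x, forall i, (y : 'rV[R]_N) ord0 i < 0 \/ c * x ord0 i <= y ord0 i.
Proof.
move=> hx c1.
suff H : forall i : 'I_N, \forall y \near x,
    (y : 'rV[R]_N) ord0 i < 0 \/ c * x ord0 i <= y ord0 i.
  by apply: (@filter_forall _ _ _ (nbhs x) _ H).
move=> i.
have := hx i; rewrite le_eqVlt => /predU1P[x0|xi0].
  near=> y; rewrite -x0 mulr0.
  by case: (ltP (y ord0 i) 0) => h; [left|right].
have cx : c * x ord0 i < x ord0 i by rewrite gtr_pMl.
have := @coord_continuous R 1 N ord0 i x _ (lt_nbhsr cx).
move=> H; near=> y; right; apply: ltW; near: y; exact: H.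
Unshelve. all: by end_near.
Qed.

Lemma key_lower {R : realType} {N : nat} {f : 'rV[R]_N -> \bar R} x c y h :
  standard_interference f -> nonnegv x -> 0 < c -> nonnegv y ->
  (forall i, y ord0 i < 0 \/ c * x ord0 i <= y ord0 i) -> 0 < h ->
  c * lv f x <= Fr f (h *: y) / h.
Proof.
move=> Hf hx c0 hy P h0.
rewrite -(lv_hom _ _ Hf hx c0).
have hcx := nn_scale hx (ltW c0).
apply: (le_trans (lv_lb _ _ Hf hcx h0)); rewrite ler_pM2r ?invr_gt0 //.
apply: Fmono => //; try exact: nn_scale (ltW h0).
move=> i; rewrite !mxE ler_pM2l //; case: (P i) => //.
by have := hy i; rewrite leNgt => /negP.
Qed.

Lemma ratio_fine {R : realType} {N : nat} {f : 'rV[R]_N -> \bar R} y h :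
  standard_interference f -> nonnegv y -> 0 < h ->
  (f (h *: y) * (h^-1)%:E)%E = (Fr f (h *: y) / h)%:E.
Proof.
by move=> Hf hy h0; rewrite (Ffin _ Hf (nn_scale hy (ltW h0))).1 -EFinM.
Qed.

Lemma lim_ray {R : realType} {N : nat} {f : 'rV[R]_N -> \bar R} x :
  standard_interference f -> nonnegv x ->
  (fun h : R => (f (h *: x) * (h^-1)%:E)%E) @ +oo --> (lv f x)%:E.
Proof.
move=> Hf hx; apply/fine_cvgP; split.
  near=> h; rewrite ratio_fine //; near: h; exact: nbhs_pinfty_gt.
apply/cvgrPdist_lt => e e0.
have [H H0 HH] := lv_approx _ _ Hf hx e0.
near=> h.
have h0 : 0 < h by near: h; exact: nbhs_pinfty_gt.
have hH : H <= h by near: h; apply: nbhs_pinfty_ge; exact: num_real.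
rewrite /= ratio_fine // /=.
have := lv_lb _ _ Hf hx h0; have := HH _ hH.
rewrite ltr_distl; move=> a b; apply/andP; split; lra.
Unshelve. all: by end_near.
Qed.

Lemma einf_ge {R : realType} (u : nat -> \bar R) a :
  (\forall n \near \oo, (a <= u n)%E) -> (a <= limn_einf u)%E.
Proof.
move=> [M _ HM]; rewrite limn_einf_lim.
rewrite (cvg_lim (@ereal_hausdorff R) (@cvg_einfs_sup R u)).
apply: (@le_trans _ _ (einfs u M)); last by apply: ereal_sup_ubound; exists M.
by apply: le_ereal_inf_tmp => _ [k /= Mk <-]; apply: HM.
Qed.

Lemma nn_unscale {R : realType} {N : nat} (y : 'rV[R]_N) h :
  ~ nonnegv y -> 0 < h -> ~ nonnegv (h *: y).
Proof.
move=> ny h0 hy; apply: ny => i; have := hy i.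
by rewrite mxE pmulr_rge0.
Qed.

Lemma seq_lower {R : realType} {N : nat} {f : 'rV[R]_N -> \bar R} x r
   (h : nat -> R) (xs : nat -> 'rV[R]_N) :
  standard_interference f -> nonnegv x -> 0 < r < 1 ->
  h @ \oo --> +oo -> xs @ \oo --> x ->
  \forall n \near \oo, ((r * lv f x)%:E <= f (h n *: xs n) * ((h n)^-1)%:E)%E.
Proof.
move=> Hf hx /andP[r0 r1] hh hxs.
have P := hxs _ (near_ge _ _ hx r1).
have /cvgryPgt/(_ 0) Q := hh.
near=> n.
have hn : 0 < h n by near: n; exact: Q.
have Pn : forall i, xs n ord0 i < 0 \/ r * x ord0 i <= xs n ord0 i.
  by near: n; exact: P.
have [nn|nn] := pselect (nonnegv (xs n)).
  by rewrite ratio_fine // lee_fin; apply: key_lower.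
have := nn_unscale _ _ nn hn => /Hf.2.2.2 ->.
by rewrite gt0_mulye ?leey // lte_fin invr_gt0.
Unshelve. all: by end_near.
Qed.

Lemma finf_nn {R : realType} {N : nat} {f : 'rV[R]_N -> \bar R} x :
  standard_interference f -> nonnegv x -> asymptotic_fun f x = (lv f x)%:E.
Proof.
move=> Hf hx; apply/eqP; rewrite eq_le; apply/andP; split.
  apply: ereal_inf_lbound.
  exists (fun n => n%:R), (fun _ => x); split.
  - exact: cvgr_idn.
  - exact: cvg_cst.
  - apply/esym; have := cvg_limn_einf_sup (cvg_comp _ _ cvgr_idn (lim_ray _ Hf hx)).
    by case.
apply: le_ereal_inf_tmp => _ [h [xs [hh hxs ->]]].
apply/lee_mul01Pr; first by rewrite lee_fin lv_ge0.
move=> r r01; apply: einf_ge; rewrite -EFinM.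
exact: seq_lower.
Qed.

Lemma finf_out {R : realType} {N : nat} {f : 'rV[R]_N -> \bar R} x :
  standard_interference f -> ~ nonnegv x -> asymptotic_fun f x = +oo%E.
Proof.
move=> Hf nx; apply/eqP; rewrite eq_le leey /=.
apply: le_ereal_inf_tmp => _ [h [xs [hh hxs ->]]].
have /existsNP [i /negP] := nx; rewrite -ltNge => xi.
have P := hxs _ (@coord_continuous R 1 N ord0 i x _ (lt_nbhsl xi)).
have /cvgryPgt/(_ 0) Q := hh.
apply: einf_ge; near=> n.
have hn : 0 < h n by near: n; exact: Q.
have nn : ~ nonnegv (xs n).
  move=> hy; have := hy i; rewrite leNgt => /negP; apply.
  by near: n; exact: P.
have := nn_unscale _ _ nn hn => /Hf.2.2.2 ->.
by rewrite gt0_mulye ?leey // lte_fin invr_gt0.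
Unshelve. all: by end_near.
Qed.

Lemma pick_r {R : realType} (L a : R) : 0 <= L -> a < L ->
  exists r, 0 < r < 1 /\ a < r * L.
Proof.
move=> L0 aL; have [a0|a0] := ltP a 0.
  exists (2^-1); split; first by apply/andP; split; lra.
  by apply: lt_le_trans a0 _; rewrite mulr_ge0 // invr_ge0.
have L0' : 0 < L by apply: le_lt_trans aL.
exists ((a + L) / (2 * L)); split.
  apply/andP; split; first by rewrite divr_gt0 // ?mulr_gt0 //; lra.
  by rewrite ltr_pdivrMr ?mulr_gt0 // mul1r; lra.
have -> : (a + L) / (2 * L) * L = (a + L) / 2 by field; rewrite gt_eqF.
lra.
Qed.

Lemma lv_ge_near {R : realType} {N : nat} {f : 'rV[R]_N -> \bar R} x r y :
  standard_interference f -> nonnegv x -> 0 < r -> nonnegv y ->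
  (forall i, y ord0 i < 0 \/ r * x ord0 i <= y ord0 i) ->
  r * lv f x <= lv f y.
Proof.
move=> Hf hx r0 hy P; apply: lv_glb => // h h0; exact: key_lower.
Qed.

Lemma finf_lsc {R : realType} {N : nat} {f : 'rV[R]_N -> \bar R} :
  standard_interference f -> lower_semicontinuous (asymptotic_fun f).
Proof.
move=> Hf x a; have [hx|nx] := pselect (nonnegv x).
  rewrite finf_nn // lte_fin => ax.
  have [r [/andP[r0 r1] ar]] := pick_r _ _ (lv_ge0 _ Hf hx) ax.
  exists [set y | forall i, (y : 'rV[R]_N) ord0 i < 0 \/ r * x ord0 i <= y ord0 i].
    exact: near_ge.
  move=> y /= P; have [hy|ny] := pselect (nonnegv y); last by rewrite finf_out // ltey.
  rewrite finf_nn // lte_fin; apply: lt_le_trans ar _; exact: lv_ge_near.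
move=> _.
have /existsNP [i /negP] := nx; rewrite -ltNge => xi.
exists [set y | (y : 'rV[R]_N) ord0 i < 0].
  exact: (@coord_continuous R 1 N ord0 i x _ (lt_nbhsl xi)).
move=> y /= yi; rewrite finf_out ?ltey // => hy.
by have := hy i; rewrite leNgt yi.
Qed.

Lemma finf_hom {R : realType} {N : nat} {f : 'rV[R]_N -> \bar R} :
  standard_interference f -> pos_homogeneous (asymptotic_fun f).
Proof.
move=> Hf x c c0; have [hx|nx] := pselect (nonnegv x).
  rewrite !finf_nn //; last exact: nn_scale (ltW c0).
  by rewrite lv_hom // EFinM.
rewrite !finf_out //; last exact: nn_unscale.
by rewrite gt0_muley // lte_fin.
Qed.

Lemma upper_near {R : realType} {N : nat} {f : 'rV[R]_N -> \bar R} x e :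
  standard_interference f ->
  (forall z, nonnegv z -> f @ within (@orthant R N) (nbhs z) --> f z) ->
  nonnegv x -> 0 < e ->
  exists2 H, 0 < H &
    \forall y \near x, nonnegv y -> Fr f (H *: y) / H < lv f x + e.
Proof.
move=> Hf hc hx e0.
have e2 : 0 < e / 2 by rewrite divr_gt0.
have [H H0 HH] := lv_approx _ _ Hf hx e2.
have hHx := nn_scale hx (ltW H0).
have Hx := HH H (lexx H).
have C : fine \o f @ within (@orthant R N) (nbhs (H *: x)) --> Fr f (H *: x).
  have := hc _ hHx; rewrite (Ffin _ Hf hHx).1 => /fine_cvgP [] //.
have lt : Fr f (H *: x) < Fr f (H *: x) + H * (e / 2).
  by rewrite ltrDl mulr_gt0.
have W := C _ (lt_nbhsl lt).
have W2 := @scaler_continuous R _ H x _ W.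
have W3 : \forall y \near x, nonnegv y ->
    Fr f (H *: y) < Fr f (H *: x) + H * (e / 2).
  have W2' : \forall y \near x,
      orthant (H *: y) -> fine (f (H *: y)) < Fr f (H *: x) + H * (e / 2).
    exact: W2.
  near=> y => hy.
  have P : orthant (H *: y) -> fine (f (H *: y)) < Fr f (H *: x) + H * (e / 2).
    exact: (near W2' y).
  exact: P (nn_scale hy (ltW H0)).
exists H => //.
near=> y => hy.
have W5 : nonnegv y -> Fr f (H *: y) < Fr f (H *: x) + H * (e / 2).
  exact: (near W3 y).
have lt2 := W5 hy.
rewrite ltr_pdivrMr //; apply: lt_le_trans lt2 _.
move: Hx; rewrite ltr_pdivrMr // => Hx.
have -> : (lv f x + e) * H = (lv f x + e / 2) * H + H * (e / 2) by field.
lra.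
Unshelve. all: by end_near.
Qed.

Lemma near_within_orth {R : realType} {N : nat} (x : 'rV[R]_N) (P : 'rV[R]_N -> Prop) :
  (\forall y \near x, nonnegv y -> P y) ->
  \forall y \near within (@orthant R N) (nbhs x), P y.
Proof. by []. Qed.

Lemma finf_cont {R : realType} {N : nat} {f : 'rV[R]_N -> \bar R} :
  standard_interference f -> {within @orthant R N, continuous f} ->
  {within @orthant R N, continuous (asymptotic_fun f)}.
Proof.
move=> Hf /subspace_continuousP hc.
apply/subspace_continuousP => x hx.
have hx' : nonnegv x := hx.
rewrite /from_subspace /= in hc *.
rewrite finf_nn //; apply/fine_cvgP; split.
  apply: near_within_orth; near=> y => hy; by rewrite finf_nn.
apply/cvgrPdist_lt => e e0.
have lxe : lv f x - e < lv f x by rewrite ltrBlDr ltrDl.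
have [r [/andP[r0 r1] ar]] := pick_r _ _ (lv_ge0 _ Hf hx') lxe.
have [H H0 HH] := upper_near _ _ Hf hc hx' e0.
have NG := near_ge _ _ hx' r1.
apply: near_within_orth; near=> y => hy.
rewrite /= finf_nn //=.
have P1 : r * lv f x <= lv f y.
  apply: lv_ge_near => //; exact: (near NG y).
have P2 : Fr f (H *: y) / H < lv f x + e.
  have P3 : nonnegv y -> Fr f (H *: y) / H < lv f x + e by exact: (near HH y).
  exact: P3.
have P4 := lv_lb _ _ Hf hy H0.
rewrite ltr_distl; apply/andP; split; lra.
Unshelve. all: by end_near.
Qed.

Lemma finf_seq {R : realType} {N : nat} {f : 'rV[R]_N -> \bar R} :
  standard_interference f -> {within @orthant R N, continuous f} ->
  forall x, nonnegv x ->
  forall (xs : nat -> 'rV[R]_N) (h : nat -> R),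
    (forall n, nonnegv (xs n)) -> (forall n, 0 < h n) ->
    xs @ \oo --> x -> h @ \oo --> +oo ->
    (fun n => (f (h n *: xs n) * ((h n)^-1)%:E)%E) @ \oo --> asymptotic_fun f x.
Proof.
move=> Hf /subspace_continuousP hc x hx xs h hxs h0 cxs ch.
rewrite /from_subspace /= in hc.
rewrite finf_nn //; apply/fine_cvgP; split.
  by apply: nearW => n; rewrite ratio_fine.
apply/cvgrPdist_lt => e e0.
have lxe : lv f x - e < lv f x by rewrite ltrBlDr ltrDl.
have [r [r01 ar]] := pick_r _ _ (lv_ge0 _ Hf hx) lxe.
have [H H0 HH] := upper_near _ _ Hf hc hx e0.
have L := seq_lower _ _ _ _ Hf hx r01 ch cxs.
have U := cxs _ HH.
have /cvgryPge/(_ H) G := ch.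
near=> n.
have L1 : ((r * lv f x)%:E <= f (h n *: xs n) * ((h n)^-1)%:E)%E.
  by near: n; exact: L.
have U1 : nonnegv (xs n) -> Fr f (H *: xs n) / H < lv f x + e.
  by near: n; exact: U.
have G1 : H <= h n by near: n; exact: G.
move: L1; rewrite /= ratio_fine // lee_fin => L1.
have D := Fdecr _ _ _ Hf (hxs n) H0 G1.
have U2 := U1 (hxs n).
rewrite /= ltr_distl; apply/andP; split; lra.
Unshelve. all: by end_near.
Qed.

Lemma finf_concave {R : realType} {N : nat} {f : 'rV[R]_N -> \bar R} :
  standard_interference f -> concave_on_orthant f ->
  concave_on_orthant (asymptotic_fun f).
Proof.
move=> Hf cf x y hx hy t /andP[t0 t1].
have t1' : 0 <= 1 - t by rewrite subr_ge0.
have hz : nonnegv (t *: x + (1 - t) *: y).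
  by move=> i; rewrite !mxE addr_ge0 // mulr_ge0.
rewrite !finf_nn // -!EFinM -EFinD lee_fin.
apply/ler_addgt0Pr => e e0.
have [H H0 HH] := lv_approx _ _ Hf hz e0.
set z := t *: x + (1 - t) *: y.
have Hz := HH H (lexx H).
have hHx := nn_scale hx (ltW H0).
have hHy := nn_scale hy (ltW H0).
have C := cf _ _ hHx hHy t (introT andP (conj t0 t1)).
have E : t *: (H *: x) + (1 - t) *: (H *: y) = H *: z.
  by rewrite /z scalerDr !scalerA (mulrC t) (mulrC (1 - t)).
rewrite E in C.
move: C; rewrite (Ffin _ Hf hHx).1 (Ffin _ Hf hHy).1.
rewrite (Ffin _ Hf (nn_scale hz (ltW H0))).1 -!EFinM -EFinD lee_fin => C.
apply: ltW; apply: le_lt_trans Hz.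
have Lx := lv_lb _ _ Hf hx H0.
have Ly := lv_lb _ _ Hf hy H0.
apply: (@le_trans _ _ (t * (Fr f (H *: x) / H) + (1 - t) * (Fr f (H *: y) / H))).
  by apply: lerD; apply: ler_wpM2l.
by rewrite !mulrA -mulrDl ler_pM2r ?invr_gt0.
Qed.

Theorem proposition1 (R : realType) (N : nat) (f : 'rV[R]_N -> \bar R) :
  standard_interference f ->
  let finf := asymptotic_fun f in
  (* (i) *)
  (forall x, nonnegv x -> exists l : R, [/\ 0 <= l, finf x = l%:E &
      (fun h : R => (f (h *: x) * (h^-1)%:E)%E) @ +oo --> l%:E]) /\
  (* (ii) *)
  (lower_semicontinuous finf /\ pos_homogeneous finf /\
   ({within @orthant R N, continuous f} ->
      {within @orthant R N, continuous finf})) /\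
  (* (iii) *)
  (forall x1 x2, nonnegv x1 -> nonnegv x2 -> vle x2 x1 ->
      (finf x2 <= finf x1)%E) /\
  (* (iv) *)
  ({within @orthant R N, continuous f} ->
    forall x, nonnegv x ->
    forall (xs : nat -> 'rV[R]_N) (h : nat -> R),
      (forall n, nonnegv (xs n)) -> (forall n, 0 < h n) ->
      xs @ \oo --> x -> h @ \oo --> +oo ->
      (fun n => (f (h n *: xs n) * ((h n)^-1)%:E)%E) @ \oo --> finf x) /\
  (* (v) *)
  (concave_on_orthant f -> concave_on_orthant finf).
Proof.
move=> Hf finf; rewrite /finf.
split; [|split; [|split; [|split]]].
- move=> x hx; exists (lv f x); split.
  + exact: lv_ge0.
  + exact: finf_nn.
  + exact: lim_ray.
- split; first exact: finf_lsc.
  split; first exact: finf_hom.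
  exact: finf_cont.
- move=> x1 x2 h1 h2 le; rewrite !finf_nn // lee_fin; exact: lv_mono.
- exact: finf_seq.
- exact: finf_concave.
Qed.
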